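(* For every $n\ge1$, $\hat r_n\le\frac85$.
   Context: Equal responsibilities $1/n$, chores $e_1,e_2,\ldots,e_m$. A picking order is $S=(S_1,\ldots,S_m)\in[n]^m$; it allocates $A_i(S)=\{e_r:S_r=i\}$ to agent $i$. For an agent $i$ with additive disvaluation $c_i$ satisfying $c_i(e_1)\ge c_i(e_2)\ge\cdots$, let $CS_i=\max\{\frac1n c_i(\{e_1,\ldots,e_m\}),c_i(e_1),c_i(e_n)+c_i(e_{n+1})\}$ (with $c_i(e_j)=0$ for $j>m$). Let $r_{n,m}(S)=\sup_{i}\sup_{c_i}c_i(A_i(S))/CS_i$, the supremum over agents and over such non-increasing additive $c_i$. $S$ is a ridge picking order if $m\ge 2n$, $S_r=r$ for $1\le r\le n$ and $S_{n+r}=n-r+1$ for $1\le r\le n$ (agent $i$ gets $e_i$ and $e_{2n-i+1}$). Let $\hat r_{n,m}=\min\{r_{n,m}(S):S\text{ a ridge picking order of length }m\}$ and $\hat r_n=\sup_{m\ge 2n}\hat r_{n,m}$. *)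

(* Defs.v *)
From mathcomp Require Import all_boot all_order all_algebra.
From mathcomp Require Import reals.
Set Implicit Arguments. Unset Strict Implicit. Unset Printing Implicit Defensive.
Import Order.TTheory GRing.Theory Num.Theory.
Local Open Scope ring_scope.

(* Chores e_1,...,e_m are indexed 0,...,m-1; agents 1..n are indexed 0..n-1.
   A picking order S = (S_1,...,S_m) is a function 'I_m -> 'I_n.
   A disvaluation of an agent is given by the sequence c = [c(e_1);...;c(e_m)];
   c`_j = nth 0 c j, so c(e_j) = 0 for j > m automatically. *)

Section Defs.
Variable R : realType.

Definition admissible_cost (m : nat) (c : seq R) : Prop :=
  [/\ size c = m, sorted (fun x y => y <= x) c & all (fun x => 0 <= x) c].

Definition bundle_cost (n m : nat) (S : 'I_m -> 'I_n) (i : 'I_n) (c : seq R) : R :=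
  \sum_(r < m | S r == i) c`_r.

Definition CS (n : nat) (c : seq R) : R :=
  Num.max (n%:R^-1 * \sum_(x <- c) x) (Num.max c`_0 (c`_n.-1 + c`_n)).

(* ridge picking order: m >= 2n, S_r = r (1<=r<=n), S_{n+r} = n-r+1 (1<=r<=n);
   0-indexed: position r < n gets agent r, position n <= r < 2n gets 2n-1-r. *)
Definition ridge (n m : nat) (S : 'I_m -> 'I_n) : Prop :=
  [/\ (2 * n <= m)%N,
      forall r : 'I_m, (r < n)%N -> val (S r) = val r
    & forall r : 'I_m, (n <= r < 2 * n)%N -> val (S r) = (2 * n - 1 - r)%N].

(* r_{n,m}(S) <= rho : for every agent i and admissible c, c(A_i(S)) <= rho * CS_i
   (this is sup_i sup_c c(A_i(S))/CS_i <= rho; when CS_i = 0 all costs vanish). *)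
Definition ratio_le (n m : nat) (S : 'I_m -> 'I_n) (rho : R) : Prop :=
  forall (i : 'I_n) (c : seq R), admissible_cost m c ->
    bundle_cost S i c <= rho * CS n c.

End Defs.

(* Main.v *)
Require Import Defs.
From mathcomp Require Import all_boot all_order all_algebra.
From mathcomp Require Import reals.
From mathcomp Require Import zify ring lra.
Import Order.TTheory GRing.Theory Num.Theory.

Section Sched.
Variable n : nat.
Definition bnd k := match k with 0 => 0 | 1 => n %/ 4 | 2 => (2*n) %/ 5 | 3 => n %/ 2
  | 4 => (3*n) %/ 5 | 5 => (17*n) %/ 20 | _ => n end.
Definition wid k := bnd k.+1 - bnd k.
Definition ORD := [:: 4;5;3;2;1;4;5;3;0;4;2;5;3;1;4;2;5;3;4;0;1;5;2;3;4;5;4;3;2;1;0]%N.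
Fixpoint own_aux (l : seq nat) (a : nat) : nat :=
  match l with [::] => 0 | k :: l' =>
    if a < wid k then bnd k.+1 - 1 - a else own_aux l' (a - wid k) end.
Definition own a := own_aux ORD a.
Definition sb b := sumn (map wid (take b ORD)).
Definition inblk i k := (bnd k <= i < bnd k.+1).
Definition posl i := [seq sb b + (bnd (nth 0 ORD b).+1 - 1 - i) |
   b <- iota 0 (size ORD) & inblk i (nth 0 ORD b)].
End Sched.
Arguments bnd : simpl never.
Arguments sb : simpl never.
Arguments wid : simpl never.
Arguments inblk : simpl never.

Definition design_ok n i :=
  let s := posl n i in let r := size s in
  let Y1 := 5 * n - r * i.+1 in
  [/\ r * n + Y1 <= 8 * n, 10 * n <= r * (2 * n - i) + Y1 + 2 * (8 * n - r * n - Y1),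
      sorted ltn s &
      forall q, q < r -> 5 * n * q.+1 + Y1 <= r * (nth 0 s q).+1 + 6 * n].

Lemma ORD_lt6 b : b < size ORD -> nth 0 ORD b < 6.
Proof. by do 31 (case: b => [|b] //=). Qed.

Lemma posl_tier n i k : k < 6 -> inblk n i k ->
  posl n i = [seq sb n b + (bnd n k.+1 - 1 - i) | b <- iota 0 (size ORD) & nth 0 ORD b == k].
Proof.
move=> hk hi; rewrite /posl.
have E : forall k', k' < 6 -> inblk n i k' = (k' == k).
  move=> k' hk'; move: hi; rewrite /inblk.
  case: (k' =P k) => [->|nk] /= hi; first by [].
  apply/negbTE/negP => hi'.
  have mono : forall a b, a <= b <= 6 -> bnd n a <= bnd n b.
    move=> a b; rewrite /bnd.
    by case: a => [|[|[|[|[|[|[|a]]]]]]]; case: b => [|[|[|[|[|[|[|b]]]]]]] //= ; lia.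
  case: (ltngtP k k') => [lt|gt|eq]; last by apply: nk.
  - have := mono k.+1 k'; lia.
  - have := mono k'.+1 k; lia.
rewrite (@eq_in_filter _ _ (fun b => nth 0 ORD b == k)); last first.
  by move=> b; rewrite mem_iota add0n => /andP[_ hb]; apply: E; apply: ORD_lt6.
apply/eq_in_map => b; rewrite mem_filter => /andP[/eqP -> _] //.
Qed.

Lemma bnd_facts n : [/\ bnd n 0 = 0, bnd n 6 = n, 4 * bnd n 1 <= n < 4 * bnd n 1 + 4,
  5 * bnd n 2 <= 2 * n < 5 * bnd n 2 + 5 &
  (2 * bnd n 3 <= n < 2 * bnd n 3 + 2) /\
  (5 * bnd n 4 <= 3 * n < 5 * bnd n 4 + 5) /\
  (20 * bnd n 5 <= 17 * n < 20 * bnd n 5 + 20)].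
Proof. rewrite /bnd /=; split => //; try split; try split; lia. Qed.

Lemma wid_facts n : [/\ wid n 0 + bnd n 0 = bnd n 1, wid n 1 + bnd n 1 = bnd n 2,
  wid n 2 + bnd n 2 = bnd n 3, wid n 3 + bnd n 3 = bnd n 4 &
  wid n 4 + bnd n 4 = bnd n 5 /\ wid n 5 + bnd n 5 = bnd n 6].
Proof. have [? ? ? ? [? [? ?]]] := bnd_facts n; rewrite /wid; split; try split; lia. Qed.

Ltac solve_tier n i k r :=
  let hb := fresh "hb" in intro hb;
  rewrite /design_ok (@posl_tier _ _ k _ hb) //=;
  revert hb; rewrite /inblk /=; intro;
  generalize (bnd_facts n) (wid_facts n); intros [? ? ? ? [? [? ?]]] [? ? ? ? [? ?]];
  rewrite /sb /=;
  (have: bnd n k.+1 - 1 - i + i + 1 = bnd n k.+1 by lia);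
  generalize (bnd n k.+1 - 1 - i); intros;
  (have: (5 * n - r * i.+1 = 0 /\ 5 * n <= r * i.+1) \/ (5 * n - r * i.+1 + r * i.+1 = 5 * n) by lia);
  generalize (5 * n - r * i.+1); intros;
  split; [lia|lia| rewrite /=; lia | ];
  case=> [|[|[|[|[|[|[|[|?]]]]]]]] ? /=; lia.

Lemma design n i : 0 < n -> i < n -> design_ok n i.
Proof.
move=> n0 hi.
have [? ? ? ? [? [? ?]]] := bnd_facts n.
have [h0|h0] := ltnP i (bnd n 1).
  have : inblk n i 0 by rewrite /inblk; lia.
  clear -n0 hi; solve_tier n i 0 3.
have [h1|h1] := ltnP i (bnd n 2).
  have : inblk n i 1 by rewrite /inblk; lia.
  clear -n0 hi; solve_tier n i 1 4.
have [h2|h2] := ltnP i (bnd n 3).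
  have : inblk n i 2 by rewrite /inblk; lia.
  clear -n0 hi; solve_tier n i 2 5.
have [h3|h3] := ltnP i (bnd n 4).
  have : inblk n i 3 by rewrite /inblk; lia.
  clear -n0 hi; solve_tier n i 3 6.
have [h4|h4] := ltnP i (bnd n 5).
  have : inblk n i 4 by rewrite /inblk; lia.
  clear -n0 hi; solve_tier n i 4 7.
have : inblk n i 5 by rewrite /inblk; lia.
clear -n0 hi; solve_tier n i 5 6.
Qed.

Lemma total n : 5 * n <= sumn (map (wid n) ORD).
Proof. generalize (bnd_facts n) (wid_facts n); intros [? ? ? ? [? [? ?]]] [? ? ? ? [? ?]]. rewrite /=. lia. Qed.

Lemma own_aux_spec n l a : a < sumn (map (wid n) l) ->
  exists2 b, b < size l &
    (bnd n (nth 0 l b) <= own_aux n l a < bnd n (nth 0 l b).+1) /\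
    a = sumn (map (wid n) (take b l)) + (bnd n (nth 0 l b).+1 - 1 - own_aux n l a).
Proof.
elim: l a => [|k l IH] a //= ha.
case: ifP => hak.
  exists 0 => //=; move: hak; rewrite /wid => hak; lia.
have /IH [b hb [h1 h2]] : a - wid n k < sumn (map (wid n) l) by lia.
exists b.+1 => //=; split => //; lia.
Qed.

Arguments own_aux_spec {n l a}.

Lemma bnd_le n k : bnd n k <= n.
Proof. rewrite /bnd; case: k => [|[|[|[|[|[|[|k]]]]]]] /=; lia. Qed.

Lemma own_lt n a : 0 < n -> own n a < n.
Proof.
move=> n0; rewrite /own.
have [ha|ha] := ltnP a (sumn (map (wid n) ORD)).
  have [b _ [/andP [_ h] _]] := own_aux_spec ha.
  exact: (leq_trans h (bnd_le _ _)).
elim: ORD a ha => [|k l IH] a //= ha.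
by rewrite ifF ?IH; lia.
Qed.

Lemma own_mem n a i : a < 5 * n -> own n a = i -> a \in posl n i.
Proof.
move=> ha hi.
have [b hb [h1 h2]] := own_aux_spec (leq_trans ha (total n)).
rewrite /own in hi; rewrite hi in h1 h2.
apply/mapP; exists b; last by rewrite h2.
by rewrite mem_filter mem_iota /= add0n hb andbT.
Qed.

Lemma sum_le_count (F : nat -> nat) i s j :
  (forall a, a < j -> F a = i -> a \in s) ->
  \sum_(a < j) (F a == i) <= count (fun x => x < j) s.
Proof.
elim: j => [|j IH] h; first by rewrite big_ord0.
rewrite big_ord_recr /=.
have -> : count (fun x => x < j.+1) s = count (fun x => x < j) s + count (pred1 j) s.
  rewrite -count_predUI.
  have -> : count (predI (fun x => x < j) (pred1 j)) s = 0.
    by apply/eqP; rewrite -leqn0 leqNgt -has_count; apply/hasPn => x _ /=; apply/negP => /andP[hx /eqP e]; by rewrite e ltnn in hx.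
  rewrite addn0; apply: eq_count => x /=; rewrite ltnS leq_eqVlt orbC; by [].
apply: leq_add; first by apply: IH => a ha; apply: h; apply: ltnW.
case: eqP => // /h; rewrite ltnSn => /(_ isT) hj.
by rewrite -has_count; apply/hasP; exists j => //=.
Qed.

Lemma cnt_lemma (s : seq nat) (U : nat) (H : nat -> nat) :
  sorted ltn s -> {homo H : x y / x <= y} ->
  (forall q, q < size s -> U * q.+1 <= H (nth 0 s q).+1) ->
  forall j, U * count (fun x => x < j) s <= H j.
Proof.
elim: s H => [|x s IH] H hs hH hq j; first by rewrite muln0.
have hs' : sorted ltn s := path_sorted hs.
have hall : all (fun y => x < y) s := order_path_min ltn_trans hs.
rewrite /=; case: (ltnP x j) => hxj; last first.
  rewrite add0n.
  have -> : count (fun x0 => x0 < j) s = 0.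
    apply/eqP; rewrite -leqn0 leqNgt -has_count; apply/hasPn => y hy /=.
    have := allP hall y hy; rewrite -leqNgt; lia.
  by rewrite muln0.
have hU : U <= H j.
  have := hq 0 isT; rewrite /= muln1 => h1; exact: (leq_trans h1 (hH _ _ hxj)).
rewrite add1n mulnS.
have h2 : U * count (fun x0 => x0 < j) s <= H j - U.
  apply: (IH (fun y => H y - U)) => //.
  - by move=> a b hab; apply: leq_sub2r; apply: hH.
  - move=> q hq'; have := hq q.+1; rewrite /= ltnS => /(_ hq'); rewrite mulnS; lia.
lia.
Qed.

Definition vv n r := if r < n then r else if r < 2*n then 2*n-1-r else own n ((r - 2*n) %% (5*n)).
Arguments own : simpl never.
Definition ff n i k := \sum_(r < k) (vv n r == i).
Definition gg n i j := \sum_(a < j) (own n (a %% (5 * n)) == i).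

Lemma ff_ridge n i k : i < n -> k <= 2*n -> ff n i k = (i < k) + (2*n - 1 - i < k).
Proof.
move=> hi; elim: k => [|k IH] hk; first by rewrite /ff big_ord0.
rewrite /ff big_ord_recr /= -/(ff n i k) IH; last by apply: ltnW.
have e : vv n k = if k < n then k else 2*n-1-k.
  by rewrite /vv; case: ifP => // _; rewrite ifT.
rewrite e; case: ifP => h1; move: (vv n k) => _; lia.
Qed.

Lemma vv_ext n j : vv n (2 * n + j) = own n (j %% (5 * n)).
Proof.
rewrite /vv.
have h1 : (2 * n + j < n) = false by lia.
have h2 : (2 * n + j < 2 * n) = false by lia.
rewrite h1 h2 (addKn (2 * n)). exact: erefl.
Qed.

Lemma ff_ext n i j : ff n i (2 * n + j) = ff n i (2 * n) + gg n i j.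
Proof.
elim: j => [|j IH]; first by rewrite addn0 /gg big_ord0 addn0.
rewrite /ff addnS big_ord_recr /= -/(ff n i (2 * n + j)) IH vv_ext.
rewrite /gg big_ord_recr /= addnA. exact: erefl.
Qed.

Lemma gg_small n i j : j <= 5 * n -> gg n i j = \sum_(a < j) (own n a == i).
Proof.
move=> hj; apply: eq_bigr => a _; rewrite modn_small //; exact: (leq_trans (ltn_ord a) hj).
Qed.

Lemma gg_shift n i j : 0 < n -> gg n i (5 * n + j) = \sum_(a < 5 * n) (own n a == i) + gg n i j.
Proof.
move=> n0; elim: j => [|j IH].
  by rewrite addn0 gg_small // /gg big_ord0 addn0.
rewrite addnS /gg big_ord_recr /= -/(gg n i (5 * n + j)) IH.
rewrite big_ord_recr /= addnA (modnDl j (5 * n)). exact: erefl.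
Qed.

Section Agent.
Variables (n i : nat).
Hypotheses (n0 : 0 < n) (hi : i < n).
Definition rr := size (posl n i).
Definition Y1 := 5 * n - rr * i.+1.
Definition Y2 := 8 * n - rr * n - Y1.
Definition Wn k := rr * k + Y1 * (0 < k) + Y2 * ((n.-1 < k) + (n < k)).

Lemma gg_le j : 5 * n * gg n i j <= rr * j + 6 * n - Y1.
Proof.
have := design n i n0 hi; move=> [d1 d2 d3 d4].
have Er : rr = size (posl n i) by [].
have EY : Y1 = 5 * n - rr * i.+1 by [].
have EY2 : Y2 = 8 * n - rr * n - Y1 by [].
have hY : Y1 <= 5 * n by rewrite /Y1 leq_subr.
have small : forall j, j <= 5 * n -> 5 * n * gg n i j <= rr * j + 6 * n - Y1.
  move=> j' hj; rewrite gg_small //.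
  apply: leq_trans (leq_mul (leqnn _) (@sum_le_count (own n) i (posl n i) j' _)) _.
    by move=> a ha e; apply: own_mem => //; exact: (leq_trans ha hj).
  apply: (@cnt_lemma (posl n i) (5 * n) (fun j => rr * j + 6 * n - Y1)) => //.
    move=> x y hxy; have := leq_mul (leqnn rr) hxy; lia.
  move=> q hq; have := d4 q hq; lia.
elim/ltn_ind: j => j IH.
have [hj|hj] := leqP j (5 * n); first exact: small.
have [j' ej] : exists j', j = 5 * n + j' by exists (j - 5 * n); lia.
rewrite ej gg_shift //.
have h1 : \sum_(a < 5 * n) (own n a == i) <= rr.
  apply: leq_trans (@sum_le_count (own n) i (posl n i) (5 * n) _) _.
    by move=> a ha e; apply: own_mem.
  exact: count_size.
have h2 := IH j'.
have h2' : j' < j by lia.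
have {h2 h2'} h2 := h2 h2'.
have h3 : 5 * n * \sum_(a < 5 * n) (own n a == i) <= 5 * n * rr by rewrite leq_mul2l h1 orbT.
rewrite mulnDr mulnDr; lia.
Qed.

Lemma Yfacts : [/\ 5 * n <= Y1 + rr * i.+1, Y1 <= 5 * n, rr * n + Y1 + Y2 = 8 * n &
  10 * n <= rr * (2 * n - i) + Y1 + 2 * Y2].
Proof.
have := design n i n0 hi; move=> [d1 d2 d3 d4].
have Er : rr = size (posl n i) by [].
have EY : Y1 = 5 * n - rr * i.+1 by [].
have EY2 : Y2 = 8 * n - rr * n - Y1 by [].
split; lia.
Qed.

Lemma ff_le k : 5 * n * ff n i k <= Wn k.
Proof.
have [F1 F2 F3 F4] := Yfacts.
rewrite /Wn.
move: (gg_le (k - 2 * n)) => G.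
move: F1 F2 F3 F4 G; move: Y1 Y2 => y1 y2 F1 F2 F3 F4 G.
have [hk|hk] := leqP k (2 * n).
  rewrite ff_ridge //.
  have [k1|k1] := leqP k i.
    have e2 : (2 * n - 1 - i < k) = false by lia.
    rewrite e2; lia.
  have hm : rr * i.+1 <= rr * k by rewrite leq_mul2l k1 orbT.
  have e0 : (0 < k) = true by lia.
  rewrite e0.
  have [k2|k2] := leqP k (2 * n - 1 - i).
    lia.
  have hm2 : rr * (2 * n - i) <= rr * k by rewrite leq_mul2l; apply/orP; right; lia.
  have e3 : (n.-1 < k) = true by lia.
  have e4 : (n < k) = true by lia.
  rewrite e3 e4; lia.
have [j ej] : exists j, k = 2 * n + j by exists (k - 2 * n); lia.
move: G; rewrite ej ff_ext ff_ridge // (addKn (2 * n)) => G.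
have e1 : (i < 2 * n) = true by lia.
have e2 : (2 * n - 1 - i < 2 * n) = true by lia.
have e0 : (0 < 2 * n + j) = true by lia.
have e3 : (n.-1 < 2 * n + j) = true by lia.
have e4 : (n < 2 * n + j) = true by lia.
rewrite e1 e2 e0 e3 e4.
have hm : rr * (2 * n + j) = rr * (2 * n) + rr * j by rewrite mulnDr.
have hm' : rr * (2 * n) = 2 * (rr * n) by rewrite mulnCA.
lia.
Qed.
Definition wn r := rr + Y1 * (r == 0) + Y2 * ((r == n.-1) + (r == n)).

Lemma sum_wn k : \sum_(r < k) wn r = Wn k.
Proof.
elim: k => [|k IH]; first by rewrite big_ord0 /Wn; lia.
rewrite big_ord_recr /= IH /Wn /wn.
have e1 : (0 < k.+1) = (0 < k) + (k == 0) :> nat by lia.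
have e2 : (n.-1 < k.+1) = (n.-1 < k) + (k == n.-1) :> nat by lia.
have e3 : (n < k.+1) = (n < k) + (k == n) :> nat by lia.
rewrite e1 e2 e3 mulnS !mulnDr; lia.
Qed.
End Agent.

Local Open Scope ring_scope.
Import Order.TTheory GRing.Theory Num.Theory.

Section Abel.
Variable R : realType.

Lemma abel (m : nat) (a w c : nat -> R) :
  (forall k, (k.+1 < m)%N -> c k.+1 <= c k) -> (forall k, (k < m)%N -> 0 <= c k) ->
  (forall k, (k <= m)%N -> \sum_(r < k) a r <= \sum_(r < k) w r) ->
  \sum_(r < m) a r * c r <= \sum_(r < m) w r * c r.
Proof.
move=> hdec hpos hpre.
pose e r := w r - a r.
have hE : forall k, (k <= m)%N -> 0 <= \sum_(r < k) e r.
  move=> k hk; rewrite /e sumrB subr_ge0; exact: hpre.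
have claim : forall k, (k.+1 <= m)%N -> (\sum_(r < k.+1) e r) * c k <= \sum_(r < k.+1) e r * c r.
  elim=> [|k IH] hk; first by rewrite !big_ord1.
  rewrite [X in _ <= X]big_ord_recr /=.
  have h1 := IH (ltnW hk).
  have h2 : (\sum_(r < k.+1) e r) * c k.+1 <= (\sum_(r < k.+1) e r) * c k.
    apply: ler_wpM2l; [exact: hE (ltnW hk) | exact: hdec].
  rewrite big_ord_recr /= mulrDl; apply: lerD => //; exact: le_trans h2 h1.
rewrite -subr_ge0 -sumrB.
have -> : \sum_(r < m) (w r * c r - a r * c r) = \sum_(r < m) e r * c r.
  by apply: eq_bigr => r _; rewrite /e mulrBl.
case: m hdec hpos hpre hE claim => [|m] hdec hpos hpre hE claim; first by rewrite big_ord0.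
apply: le_trans (claim m (leqnn _)); apply: mulr_ge0; [exact: hE | exact: hpos].
Qed.

Lemma sum_ind_c (m p : nat) (F : nat -> R) :
  \sum_(r < m) ((r : nat) == p)%:R * F r = (p < m)%:R * F p.
Proof.
elim: m => [|m IH]; first by rewrite big_ord0 ltn0 mul0r.
rewrite big_ord_recr /= IH.
case: (ltngtP p m) => h.
- have -> : (p < m.+1)%N = true by apply: ltnW; rewrite ltnS.
  by rewrite mul0r addr0.
- have -> : (p < m.+1)%N = false by rewrite ltnS leqNgt h.
  by rewrite !mul0r addr0.
- by rewrite h ltnS leqnn mul0r add0r.
Qed.

End Abel.


Section Helpers.
Variable R : realType.

Lemma sum_w3 (m p1 p2 p3 : nat) (A B C : R) (F : nat -> R) :
  \sum_(r < m) (A + B * ((r : nat) == p1)%:R + C * (((r : nat) == p2)%:R + ((r : nat) == p3)%:R)) * F r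
  = A * \sum_(r < m) F r + B * ((p1 < m)%:R * F p1) + C * ((p2 < m)%:R * F p2 + (p3 < m)%:R * F p3).
Proof.
rewrite (eq_bigr (fun r : 'I_m => A * F r + B * (((r : nat) == p1)%:R * F r) +
   C * (((r : nat) == p2)%:R * F r) + C * (((r : nat) == p3)%:R * F r))); last by move=> r _; ring.
rewrite !big_split /= -!mulr_sumr !sum_ind_c; ring.
Qed.

Lemma sum_w3' (m p1 p2 p3 : nat) (A B C : R) :
  \sum_(r < m) (A + B * ((r : nat) == p1)%:R + C * (((r : nat) == p2)%:R + ((r : nat) == p3)%:R))
  = A * m%:R + B * (p1 < m)%:R + C * ((p2 < m)%:R + (p3 < m)%:R).
Proof.
have H := sum_w3 m p1 p2 p3 A B C (fun _ => 1).
have H2 : \sum_(r < m) (A + B * ((r : nat) == p1)%:R + C * (((r : nat) == p2)%:R + ((r : nat) == p3)%:R))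
  = \sum_(r < m) (A + B * ((r : nat) == p1)%:R + C * (((r : nat) == p2)%:R + ((r : nat) == p3)%:R)) * (fun _ : nat => (1 : R)) r.
  by apply: eq_bigr => r _; rewrite mulr1.
rewrite H2 H !mulr1 sumr_const card_ord; ring.
Qed.
Lemma divr_comb (x y z k b1 b2 b3 D : R) :
  x / D * k + y / D * b1 + z / D * (b2 + b3) = (x * k + y * b1 + z * (b2 + b3)) / D.
Proof. by rewrite !mulrDl !(mulrAC _ _ D^-1). Qed.
End Helpers.

Theorem theorem6 (R : realType) (n : nat) :
  (1 <= n)%N ->
  forall m : nat, (2 * n <= m)%N ->
  exists S : 'I_m -> 'I_n, ridge S /\ ratio_le S (8 / 5 : R).
Proof.
case: n => [//|n'] _ m hm.
have n0 : (0 < n'.+1)%N by [].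
have vlt : forall r, (vv n'.+1 r < n'.+1)%N.
  move=> r; rewrite /vv; case: ifP => // h1; case: ifP => h2; last exact: own_lt.
  move: h1 => /negbT; rewrite -leqNgt => h1; lia.
pose S := fun r : 'I_m => (inord (vv n'.+1 r) : 'I_n'.+1).
have vS : forall r : 'I_m, val (S r) = vv n'.+1 r.
  move=> r; exact: (inordK (vlt r)).
exists S; split.
  split => // r hr; rewrite vS /vv.
    by rewrite hr.
  case/andP: hr => h1 h2.
  have -> : (r < n'.+1)%N = false by lia.
  by rewrite h2.
move=> i c [hsz hsort hpos].
have hii : (i < n'.+1)%N := ltn_ord i.
have [F1 F2 F3 F4] := Yfacts n'.+1 i n0 hii.
set N := n'.+1 in vlt vS hii F1 F2 F3 F4 hm n0 *.
have D0 : (0 : R) < (5 * N)%:R by rewrite ltr0n muln_gt0.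
set D := (5 * N)%:R : R.
pose A := (rr N i)%:R / D; pose B := (Y1 N i)%:R / D; pose C := (Y2 N i)%:R / D.
have E1 : bundle_cost S i c = \sum_(r < m) (vv N r == i)%:R * c`_r.
  rewrite /bundle_cost big_mkcond; apply: eq_bigr => r _.
  rewrite -val_eqE vS; case: (vv N r == i); by rewrite ?mul1r ?mul0r.
pose w := fun r : nat => A + B * (r == 0)%:R + C * ((r == N.-1)%:R + (r == N)%:R).
have tr : transitive (fun x : R => <=%R^~ x) by move=> y x z /= h1 h2; exact: le_trans h2 h1.
have AB : \sum_(r < m) (vv N r == i)%:R * c`_r <= \sum_(r < m) w r * c`_r.
  apply: (@abel R m (fun r => (vv N r == i)%:R) w (fun r => c`_r)).
  - move=> k hk.
    have h1 : k \in [pred x | (x < size c)%N] by rewrite inE hsz; exact: ltnW.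
    have h2 : k.+1 \in [pred x | (x < size c)%N] by rewrite inE hsz.
    exact: (sorted_ltn_nth tr 0 hsort k k.+1 h1 h2 (ltnSn k)).
  - move=> k hk; apply: (all_nthP 0 hpos); rewrite hsz; exact: hk.
  - move=> k hk; rewrite /w sum_w3' -natr_sum.
    have EW : A * k%:R + B * (0 < k)%:R + C * ((N.-1 < k)%:R + (N < k)%:R) = (Wn N i k)%:R / D.
      rewrite /A /B /C /Wn !natrD !natrM !natrD.
      exact: divr_comb.
    rewrite EW (ler_pdivlMr _ _ D0) /D -natrM ler_nat mulnC.
    exact: (ff_le N i n0 hii k).
rewrite E1; apply: (le_trans AB).
rewrite /w sum_w3.
have m2 : (N < m)%N by clear -hm n0; lia.
have m1 : (N.-1 < m)%N := leq_ltn_trans (leq_pred N) m2.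
have m0 : (0 < m)%N := leq_ltn_trans (leq0n _) m2.
rewrite m0 m1 m2 !mul1r.
have hS : \sum_(x <- c) x = \sum_(r < m) c`_r by rewrite (big_nth 0) hsz big_mkord.
have N0 : (0 : R) < N%:R by rewrite ltr0n.
have hCS1 : \sum_(r < m) c`_r <= N%:R * CS N c.
  rewrite -hS -(ler_pdivrMl _ _ N0) /CS le_max lexx; exact: isT.
have hCS2 : c`_0 <= CS N c.
  rewrite /CS le_max; apply/orP; right; rewrite le_max lexx; exact: isT.
have hCS3 : c`_N.-1 + c`_N <= CS N c.
  rewrite /CS le_max; apply/orP; right; rewrite le_max lexx orbT; exact: isT.
have A0 : 0 <= A by rewrite /A divr_ge0 // ltW.
have B0 : 0 <= B by rewrite /B divr_ge0 // ltW.
have C0 : 0 <= C by rewrite /C divr_ge0 // ltW.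
have E : A * N%:R + B + C = 8 / 5.
  have F3r : ((rr N i) * N + (Y1 N i) + (Y2 N i))%:R = (8 * N)%:R :> R by rewrite F3.
  move: F3r; rewrite !natrD !natrM => F3r.
  have -> : A * N%:R + B + C = ((rr N i)%:R * N%:R + (Y1 N i)%:R + (Y2 N i)%:R) / D.
    by rewrite /A /B /C !mulrDl mulrAC.
  rewrite F3r /D natrM invfM mulrACA divff ?mulr1 //; exact: lt0r_neq0 N0.
apply: (@le_trans _ _ (A * (N%:R * CS N c) + B * CS N c + C * CS N c)).
  apply: lerD; [apply: lerD|]; apply: ler_wpM2l; assumption.
have -> : A * (N%:R * CS N c) + B * CS N c + C * CS N c = (A * N%:R + B + C) * CS N c.
  by rewrite !mulrDl mulrA.
by rewrite E.
Qed.
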